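(* For every even integer $k\ge 4$, the graph $M_{\rm III}(k)$ is not word-representable.
   Context: For even $k\ge4$, $M_{\rm III}(k)$ is the split graph with clique $C=\{c_1,\dots,c_{k+1}\}$ and independent set $I=\{b,a_1,\dots,a_{k-1}\}$, where $N(b)=\{c_2,\dots,c_{k-1},c_{k+1}\}$ and $N(a_i)=\{c_i,c_{i+1}\}$ for $1\le i\le k-1$. A graph $G=(V,E)$ is word-representable if there is a word $w$ over $V$ such that for all distinct $a,b\in V$, $ab\in E$ iff $a$ and $b$ alternate in $w$ (i.e. the subsequence of $w$ formed by all occurrences of $a$ and $b$ is $abab\cdots$ or $baba\cdots$). *)

(* Defs.v *)
From mathcomp Require Import all_boot.
Set Implicit Arguments. Unset Strict Implicit. Unset Printing Implicit Defensive.

Definition alternate (T : eqType) (w : seq T) (x y : T) : bool :=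
  sorted (fun a b => a != b) (filter (fun z => (z == x) || (z == y)) w).

Definition word_representable (T : finType) (E : rel T) : Prop :=
  exists w : seq T, (forall x : T, x \in w) /\
    (forall x y : T, x != y -> (E x y <-> alternate w x y)).

(* Vertices of M_III(k): inl i  (i : 'I_(k+1)) is the clique vertex c_(i+1);
   inr 0 is b; inr i (1 <= i <= k-1) is a_i. *)
Definition MIII_vertex (k : nat) : finType := ('I_k.+1 + 'I_k)%type.

Definition MIII_ci (k : nat) (i : 'I_k.+1) (a : 'I_k) : bool :=
  if nat_of_ord a == 0 then ((1 <= i <= k - 2) || (nat_of_ord i == k))
  else ((nat_of_ord i == a - 1) || (nat_of_ord i == nat_of_ord a)).

Definition MIII_adj (k : nat) : rel (MIII_vertex k) :=
  fun u v => match u, v with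
  | inl i, inl j => i != j
  | inl i, inr a => MIII_ci i a
  | inr a, inl i => MIII_ci i a
  | inr _, inr _ => false
  end.

(* Main.v *)
Require Import Defs.
From mathcomp Require Import all_boot zify.
From Stdlib Require Import Classical.
Set Implicit Arguments. Unset Strict Implicit. Unset Printing Implicit Defensive.

Definition cnt (T : eqType) (w : seq T) p x := count_mem x (take p w).
Definition G (T : eqType) (w : seq T) x y :=
  forall p, cnt w p y <= cnt w p x <= (cnt w p y).+1.

Lemma G_nil (T : eqType) (x y : T) : G [::] x y.
Proof. by move=> p; rewrite /cnt. Qed.

Lemma cnt_cons (T : eqType) (w : seq T) a p x :
  cnt (a :: w) p.+1 x = (a == x) + cnt w p x.
Proof. by rewrite /cnt /= eq_sym. Qed.

Lemma G_x (T : eqType) (w : seq T) x y : x != y -> G (x :: w) x y <-> G w y x.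
Proof.
move=> nxy; split => H p.
- move: (H p.+1); rewrite !cnt_cons eqxx (negbTE nxy); lia.
- case: p => [|p]; first by rewrite /cnt.
  move: (H p); rewrite !cnt_cons eqxx (negbTE nxy); lia.
Qed.

Lemma G_y (T : eqType) (w : seq T) x y : x != y -> ~ G (y :: w) x y.
Proof.
move=> nxy H; move: (H 1); rewrite !cnt_cons eqxx eq_sym (negbTE nxy) /cnt /= take0 /=; lia.
Qed.

Lemma G_o (T : eqType) (w : seq T) x y a : a != x -> a != y ->
  G (a :: w) x y <-> G w x y.
Proof.
move=> nx ny; split => H p.
- move: (H p.+1); rewrite !cnt_cons (negbTE nx) (negbTE ny); lia.
- case: p => [|p]; first by rewrite /cnt.
  move: (H p); rewrite !cnt_cons (negbTE nx) (negbTE ny); lia.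
Qed.

Lemma G_path (T : eqType) (w : seq T) x y : x != y ->
  G w x y <-> path (fun a b => a != b) y (filter (fun z => (z == x) || (z == y)) w).
Proof.
elim: w x y => [|a w IH] x y nxy /=; first by split => // _; exact: G_nil.
case: (eqVneq a x) => [->|nax] /=.
- rewrite G_x // eq_sym nxy /= IH 1?eq_sym //.
  by rewrite (eq_filter (a2 := fun z => (z == x) || (z == y))) // => z; rewrite orbC.
case: (eqVneq a y) => [->|nay] /=.
- by rewrite eqxx /=; split => // H; case: (G_y nxy H).
rewrite G_o // IH //. 
Qed.

Lemma alt_G (T : eqType) (w : seq T) x y : x != y ->
  alternate w x y <-> G w x y \/ G w y x.
Proof.
move=> nxy; rewrite /alternate G_path // G_path 1?eq_sym //.
rewrite (eq_filter (a1 := fun z => (z == y) || (z == x))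
   (a2 := fun z => (z == x) || (z == y))); last by move=> z; rewrite orbC.
have := filter_all (fun z => (z == x) || (z == y)) w.
case: (filter _ w) => [|h t] /=; first by split => // _; left.
case/andP => /orP [] /eqP -> _.
- rewrite eq_sym nxy eqxx /=; split; [by left| by case].
- rewrite nxy eqxx /=; split; [by right| by case].
Qed.

Lemma G_index (T : eqType) (w : seq T) x y : x != y -> y \in w -> G w x y ->
  index x w < index y w.
Proof.
elim: w => [|a w IH] // nxy; rewrite inE /=.
case: (eqVneq a x) => [->|nax] /=.
- by rewrite (negbTE nxy).
case: (eqVneq a y) => [->|nay] /=; first by move=> _ /G_y; case.
move=> yw /(G_o _ nax nay) H.
by have := IH nxy yw H.
Qed.

Lemma G_short (T : eqType) (w : seq T) a b c d :
  G w a b -> G w b c -> G w c d -> G w a d -> G w a c /\ G w b d.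
Proof.
move=> h1 h2 h3 h4; split => p; move: (h1 p) (h2 p) (h3 p) (h4 p); lia.
Qed.

Ltac prune := repeat match goal with
  | H : ?P |- _ => lazymatch type of P with Prop =>
      lazymatch P with
      | forall _, _ => clear H
      | context [index] => fail
      | _ => clear H end end
  end.
Ltac plia := prune; lia.

Definition R (T : eqType) (w : seq T) (inC : pred T) u v :=
 (forall z, inC z -> ~ (index u w < index z w < index v w \/ index v w < index z w < index u w)) \/
 (forall z, inC z -> (index u w <= index z w <= index v w) \/ (index v w <= index z w <= index u w)).

Lemma finj (T : eqType) (w : seq T) (Hall : forall x, x \in w) x y :
  index x w = index y w -> x = y.
Proof. by move=> e; rewrite -(nth_index x (Hall x)) e nth_index. Qed.

Lemma Gidx (T : eqType) (w : seq T) (Hall : forall x, x \in w) x y :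
  x != y -> G w x y -> index x w < index y w.
Proof. by move=> nxy; apply: G_index. Qed.

Lemma orient (T : eqType) (w : seq T) (inC : pred T) (Hall : forall x, x \in w)
  (Hcl : forall x y, inC x -> inC y -> x != y -> G w x y \/ G w y x) x y :
  inC x -> inC y -> index x w < index y w -> G w x y.
Proof.
move=> cx cy lt.
have nxy : x != y by apply/eqP => e; move: lt; rewrite e; lia.
case: (Hcl x y) => // H; have := Gidx Hall _ H; rewrite eq_sym nxy => /(_ isT); lia.
Qed.

Lemma Rsym (T : eqType) (w : seq T) (inC : pred T) u v : R w inC u v -> R w inC v u.
Proof.
case=> H; [left|right] => z cz; move: (H z cz); lia.
Qed.

Lemma R2 (T : eqType) (w : seq T) (inC : pred T) (Hall : forall x, x \in w)
  (Hcl : forall x y, inC x -> inC y -> x != y -> G w x y \/ G w y x) a u v :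
  inC u -> inC v -> u != v -> a != u -> a != v ->
  (G w a u \/ G w u a) -> (G w a v \/ G w v a) ->
  (forall z, inC z -> z != u -> z != v -> ~ G w a z /\ ~ G w z a) -> R w inC u v.
Proof.
move=> cu cv nuv nau nav.
wlog lt : u v cu cv nuv nau nav / index u w < index v w.
  move=> Hw Hu Hv Hz.
  have : index u w != index v w by apply/eqP => /(finj Hall) /eqP; rewrite (negbTE nuv).
  case: ltngtP => // l _.
  - exact: Hw.
  - apply: Rsym; apply: Hw => //; first by rewrite eq_sym.
    by move=> z cz n1 n2; apply: Hz.
have nva : v != a by rewrite eq_sym.
have nua : u != a by rewrite eq_sym.
have nvu : v != u by rewrite eq_sym.
have ori := orient Hall Hcl.
case=> [gau|gua] [gav|gva] Hz.
- left => z cz bt.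
  have zu : z != u by apply/eqP => e; move: bt; rewrite e; plia.
  have zv : z != v by apply/eqP => e; move: bt; rewrite e; plia.
  have guz : G w u z by apply: ori => //; plia.
  have gzv : G w z v by apply: ori => //; plia.
  have [H _] := G_short gau guz gzv gav.
  by case: (Hz z cz zu zv).
- have := Gidx Hall nau gau; have := Gidx Hall nva gva; plia.
- right => z cz.
  case: (eqVneq z u) => [->|zu]; first plia.
  case: (eqVneq z v) => [->|zv]; first plia.
  have [l1|g1] := ltnP (index z w) (index u w).
    have gzu : G w z u by apply: ori.
    have gzv : G w z v by apply: ori => //; plia.
    have [H _] := G_short gzu gua gav gzv.
    by case: (Hz z cz zu zv).
  have [g2|l2] := ltnP (index v w) (index z w); last plia.
  have gvz : G w v z by apply: ori.
  have guz : G w u z by apply: ori => //; plia.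
  have [_ H] := G_short gua gav gvz guz.
  by case: (Hz z cz zu zv).
- left => z cz bt.
  have zu : z != u by apply/eqP => e; move: bt; rewrite e; plia.
  have zv : z != v by apply/eqP => e; move: bt; rewrite e; plia.
  have guz : G w u z by apply: ori => //; plia.
  have gzv : G w z v by apply: ori => //; plia.
  have [_ H] := G_short guz gzv gva gua.
  by case: (Hz z cz zu zv).
Qed.

Lemma RB (T : eqType) (w : seq T) (inC : pred T) (Hall : forall x, x \in w)
  (Hcl : forall x y, inC x -> inC y -> x != y -> G w x y \/ G w y x) b u v :
  inC u -> inC v -> u != v -> ~~ inC b ->
  ~ G w b u -> ~ G w u b -> ~ G w b v -> ~ G w v b ->
  (forall z, inC z -> z != u -> z != v -> G w b z \/ G w z b) -> R w inC u v.
Proof.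
move=> cu cv nuv nb.
wlog lt : u v cu cv nuv / index u w < index v w.
  move=> Hw h1 h2 h3 h4 Hz.
  have : index u w != index v w by apply/eqP => /(finj Hall) /eqP; rewrite (negbTE nuv).
  case: ltngtP => // l _.
  - exact: Hw.
  - apply: Rsym; apply: Hw => //; first by rewrite eq_sym.
    by move=> z cz n1 n2; apply: Hz.
move=> n1 n2 n3 n4 Hz.
have ori := orient Hall Hcl.
have nbz : forall z, inC z -> b != z.
  by move=> z cz; apply/eqP => e; move: nb; rewrite e cz.
have nzb : forall z, inC z -> z != b by move=> z cz; rewrite eq_sym nbz.
destruct (classic (exists z1, inC z1 /\ index u w < index z1 w < index v w))
  as [[z1 [c1 b1]] | N1]; last first.
  left => z cz bt; apply: N1; exists z; split => //; plia.
destruct (classic (exists z2, inC z2 /\ (index z2 w < index u w \/ index v w < index z2 w)))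
  as [[z2 [c2 b2]] | N2]; last first.
  right => z cz.
  have : ~ (index z w < index u w \/ index v w < index z w) by move=> h; apply: N2; exists z.
  plia.
have z1u : z1 != u by apply/eqP => e; move: b1; rewrite e; plia.
have z1v : z1 != v by apply/eqP => e; move: b1; rewrite e; plia.
have z2u : z2 != u by apply/eqP => e; move: b2; rewrite e; plia.
have z2v : z2 != v by apply/eqP => e; move: b2; rewrite e; plia.
case: b2 => b2.
- case: (Hz z1 c1 z1u z1v) => g1; case: (Hz z2 c2 z2u z2v) => g2.
  + have [H _] := G_short g2 (ori z2 u c2 cu b2) (ori u z1 cu c1 ltac:(plia)) g1. by [].
  + have [_ H] := G_short g2 g1 (ori z1 v c1 cv ltac:(plia)) (ori z2 v c2 cv ltac:(plia)). by [].
  + have := Gidx Hall (nbz _ c2) g2; have := Gidx Hall (nzb _ c1) g1; plia.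
  + have [_ H] := G_short (ori z2 u c2 cu b2) (ori u z1 cu c1 ltac:(plia)) g1 g2. by [].
- case: (Hz z1 c1 z1u z1v) => g1; case: (Hz z2 c2 z2u z2v) => g2.
  + have [H _] := G_short g1 (ori z1 v c1 cv ltac:(plia)) (ori v z2 cv c2 b2) g2. by [].
  + have := Gidx Hall (nbz _ c1) g1; have := Gidx Hall (nzb _ c2) g2; plia.
  + have [H _] := G_short (ori u z1 cu c1 ltac:(plia)) g1 g2 (ori u z2 cu c2 ltac:(plia)). by [].
  + have [_ H] := G_short (ori z1 v c1 cv ltac:(plia)) (ori v z2 cv c2 b2) g2 g1. by [].
Qed.

Lemma R3 (T : eqType) (w : seq T) (inC : pred T) (Hall : forall x, x \in w) u p q r :
  inC u -> inC p -> inC q -> inC r ->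
  u != p -> u != q -> u != r -> p != q -> p != r -> q != r ->
  R w inC u p -> R w inC u q -> R w inC u r -> False.
Proof.
move=> cu cp cq cr d1 d2 d3 d4 d5 d6.
have D : forall x y, x != y -> index x w != index y w.
  by move=> x y nxy; apply/eqP => /(finj Hall) /eqP; rewrite (negbTE nxy).
move: (D _ _ d1) (D _ _ d2) (D _ _ d3) (D _ _ d4) (D _ _ d5) (D _ _ d6).
move=> e1 e2 e3 e4 e5 e6.
move=> R1 R2 R3.
case: R1 => H1; case: R2 => H2; case: R3 => H3;
  move: (H1 u cu) (H1 p cp) (H1 q cq) (H1 r cr) (H2 u cu) (H2 p cp) (H2 q cq) (H2 r cr)
        (H3 u cu) (H3 p cp) (H3 q cq) (H3 r cr); clear H1 H2 H3; plia.
Qed.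

Definition isC k (v : MIII_vertex k) : bool := if v is inl _ then true else false.
Definition cv k (m : nat) : MIII_vertex k.+1 := inl (inord m).
Definition av k (i : nat) : MIII_vertex k.+1 := inr (inord i).

Lemma cne k m n : m <= k.+1 -> n <= k.+1 -> m != n -> cv k m != cv k n.
Proof.
move=> hm hn nmn; apply/eqP => [[]] /(congr1 val); rewrite /= !inordK // => e.
by move: nmn; rewrite e eqxx.
Qed.

Lemma val_ne k (j : 'I_k.+2) m : m <= k.+1 -> inl j != cv k m -> val j != m.
Proof.
move=> hm; apply: contra => /eqP e; apply/eqP; congr inl; apply: val_inj.
by rewrite /= inordK.
Qed.

Lemma adj_ac k i (j : 'I_k.+2) : i < k.+1 ->
  MIII_adj (av k i) (inl j) =
  if i == 0 then (1 <= j <= k.+1 - 2) || (val j == k.+1) else (val j == i - 1) || (val j == i).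
Proof. by move=> hi; rewrite /= /MIII_ci inordK. Qed.

Lemma adj_ca k i (j : 'I_k.+2) : i < k.+1 ->
  MIII_adj (inl j) (av k i) = MIII_adj (av k i) (inl j).
Proof. by []. Qed.

Ltac mprune := repeat match goal with
  | H : ?P |- _ => lazymatch type of P with Prop =>
      lazymatch P with
      | forall _, _ => clear H
      | context [G] => clear H
      | context [R] => clear H
      | context [MIII_adj] => clear H
      | _ => fail end end
  end.
Ltac mlia := mprune; lia.

Theorem lemma11 (k : nat) : 4 <= k -> ~~ odd k ->
  ~ word_representable (@MIII_adj k).
Proof.
case: k => [|k] // k4 _ [w [Hall Hrep]].
pose inC := @isC k.+1.
have Hadj : forall x y, x != y -> (MIII_adj x y <-> G w x y \/ G w y x).
  by move=> x y nxy; rewrite -alt_G //; apply: Hrep.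
have Hcl : forall x y, inC x -> inC y -> x != y -> G w x y \/ G w y x.
  move=> [i|i] [j|j] //= _ _ nij; apply/Hadj => //=.
have Hnon : forall x y, x != y -> ~~ MIII_adj x y -> ~ G w x y /\ ~ G w y x.
  move=> x y nxy na; split => g; move/negP: na; apply; apply/Hadj => //; tauto.
have Hyes : forall x y, x != y -> MIII_adj x y -> G w x y \/ G w y x.
  by move=> x y nxy /Hadj; apply.
have F : forall i, i < k -> R w inC (cv k i) (cv k i.+1).
  move=> i ik.
  apply: (@R2 _ w inC Hall Hcl (av k i.+1)) => //.
  - by apply: cne => //; mlia.
  - apply: Hyes => //; rewrite /cv adj_ac //= inordK ?subn1 ?eqxx //; mlia.
  - apply: Hyes => //; rewrite /cv adj_ac //= inordK ?subn1 ?eqxx ?orbT //; mlia.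
  - case=> [j|j] // _ n1 n2; apply: Hnon => //.
    have h1 := val_ne (m := i) _ n1; have h2 := val_ne (m := i.+1) _ n2.
    rewrite adj_ac /=; last mlia.
    have := h1 ltac:(mlia); have := h2 ltac:(mlia).
    by rewrite subn1 /= => a b; rewrite negb_or a b.
have FB : R w inC (cv k 0) (cv k k).
  have nb0 : ~~ MIII_adj (av k 0) (cv k 0).
    by rewrite /cv adj_ac // /= inordK.
  have nbk : ~~ MIII_adj (av k 0) (cv k k).
    rewrite /cv adj_ac // /= inordK //.
    apply/negP => /orP [/andP [_ h] | /eqP h]; mlia.
  have [g1 g2] := Hnon (av k 0) (cv k 0) isT nb0.
  have [g3 g4] := Hnon (av k 0) (cv k k) isT nbk.
  apply: (@RB _ w inC Hall Hcl (av k 0)) => //.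
  - by apply: cne => //; mlia.
  - case=> [j|j] // _ n1 n2; apply: Hyes => //.
    have h1 := val_ne (m := 0) _ n1; have h2 := val_ne (m := k) _ n2.
    have := h1 ltac:(mlia); have := h2 ltac:(mlia).
    rewrite adj_ac //=.
    have := ltn_ord j.
    mlia.
pose c := (cv k k.+1).
have Nb : exists j : 'I_k.+2, (val j != k.+1) /\ R w inC c (inl j).
  case: (classic (exists j : 'I_k.+2, index c w < index (inl j : MIII_vertex k.+1) w)) => [ex|nex].
  - pose P := fun n => [exists j : 'I_k.+2,
       (index (inl j : MIII_vertex k.+1) w == n) && (index c w < n)].
    have Pex : exists n, P n.
      case: ex => j hj; exists (index (inl j : MIII_vertex k.+1) w).
      by apply/existsP; exists j; rewrite eqxx hj.
    case: (ex_minnP Pex) => n /existsP [j /andP [/eqP ej hj]] mn.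
    exists j; split.
    + apply/eqP => e.
      have E : inl j = c by rewrite /c /cv; f_equal; apply: val_inj; rewrite /= inordK.
      by move: hj; rewrite -ej E; mlia.
    + left => z; case: z => [j'|j'] // _ bt.
      case: bt => /andP [b1 b2].
      * have : P (index (inl j' : MIII_vertex k.+1) w).
          by apply/existsP; exists j'; rewrite eqxx b1.
        move/mn; mlia.
      * mlia.
  - pose P := fun n => [exists j : 'I_k.+2,
       (val j != k.+1) && (index (inl j : MIII_vertex k.+1) w == n)].
    have Pex : exists n, P n.
      by exists (index (inl ord0 : MIII_vertex k.+1) w); apply/existsP; exists ord0; rewrite eqxx.
    case: (ex_minnP Pex) => n /existsP [j /andP [jk /eqP ej]] mn.
    exists j; split => //.
    right => z; case: z => [j'|j'] // _.
    have nle : index (inl j' : MIII_vertex k.+1) w <= index c w.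
      by rewrite leqNgt; apply/negP => h; apply: nex; exists j'.
    case: (eqVneq (val j') k.+1) => ej'.
      have E : inl j' = c by rewrite /c /cv; f_equal; apply: val_inj; rewrite /= inordK ?(eqP ej').
      rewrite E; have : index (inl j : MIII_vertex k.+1) w <= index c w.
        by rewrite leqNgt; apply/negP => h; apply: nex; exists j.
      mlia.
    have : P (index (inl j' : MIII_vertex k.+1) w) by apply/existsP; exists j'; rewrite ej' eqxx.
    move/mn; mlia.
case: Nb => j [jk Rj].
have cjE : (inl j : MIII_vertex k.+1) = cv k (val j).
  by rewrite /cv inord_val.
have jlt : val j < k.+1.
  have := ltn_ord j; move: jk; change (\val j) with (nat_of_ord j); mlia.
rewrite cjE in Rj.
have Rc := Rsym Rj.
have CC : forall m, inC (cv k m) by [].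
case: (eqVneq (val j) 0) => [j0|j0].
- rewrite j0 in Rc.
  apply: (@R3 _ w inC Hall (cv k 0) (cv k 1) (cv k k) c) => //;
    try (apply: cne; mlia).
  apply: F; mlia.
case: (eqVneq (val j) k) => [jk'|jk'].
- rewrite jk' in Rc.
  have h1 := F k.-1 ltac:(mlia).
  have e : k.-1.+1 = k by mlia.
  rewrite e in h1.
  apply: (@R3 _ w inC Hall (cv k k) (cv k k.-1) (cv k 0) c) => //;
    try (apply: cne; mlia).
  + exact: Rsym.
  + exact: Rsym.
have h1 := F (val j).-1 ltac:(mlia).
have e : (val j).-1.+1 = val j by mlia.
rewrite e in h1.
have h2 := F (val j) ltac:(mlia).
apply: (@R3 _ w inC Hall (cv k (val j)) (cv k (val j).-1) (cv k (val j).+1) c) => //;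
  try (apply: cne; mlia).
exact: Rsym.
Qed.
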